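(* Let $X$ be an indiscrete topological space. Then for any starting points $m,l\in X$, the lion has a strategy in $X$ for the starting points $m$ (man) and $l$ (lion).
   Context: For a topological space $X$ and $x\in X$, let $P_x(X)$ be the set of continuous maps $\gamma:[0,+\infty)\to X$ with $\gamma(0)=x$. For $\gamma\in P_x(X)$ and $t\ge 0$, write $\gamma_{<t}=\gamma|_{[0,t)}$ and $\gamma_{\le t}=\gamma|_{[0,t]}$. Given starting points $m$ (man) and $l$ (lion) in $X$, a strategy for the lion is a function $S:P_m(X)\to P_l(X)$ such that (i) for each $\alpha\in P_m(X)$ there exists $t\ge 0$ with $S(\alpha)(t)=\alpha(t)$; and (ii) (no-lookahead rule) whenever $\alpha,\alpha'\in P_m(X)$ and $t\ge0$ satisfy $\alpha_{<t}=\alpha'_{<t}$, then $S(\alpha)_{\le t}=S(\alpha')_{\le t}$. The Axiom of Choice is assumed. *)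

(* Defs.v *)
From mathcomp Require Import all_boot all_order all_algebra.
From mathcomp Require Import all_classical all_reals topology normedtype.
Set Implicit Arguments. Unset Strict Implicit. Unset Printing Implicit Defensive.
Import Order.TTheory GRing.Theory Num.Theory.
Import numFieldNormedType.Exports.
Local Open Scope classical_set_scope.
Local Open Scope ring_scope.

Definition indiscrete (X : topologicalType) : Prop :=
  forall A : set X, open A -> A = set0 \/ A = setT.

(* Paths are represented by functions R -> X; only their values on [0,+oo)
   matter.  gamma is in P_x(X) iff it is continuous on [0,+oo) (subspace
   topology) and gamma 0 = x. *)
Definition is_path (R : realType) (X : topologicalType) (x : X) (g : R -> X)
  : Prop :=
  {within [set t : R | 0 <= t], continuous g} /\ g 0 = x.

Definition agree_lt (R : realType) (X : Type) (t : R) (f g : R -> X) : Prop :=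
  forall s, 0 <= s -> s < t -> f s = g s.

Definition agree_le (R : realType) (X : Type) (t : R) (f g : R -> X) : Prop :=
  forall s, 0 <= s -> s <= t -> f s = g s.

(* A lion strategy: a map on paths (its values on non-paths are irrelevant). *)
Definition lion_strategy (R : realType) (X : topologicalType) (m l : X)
  (S : (R -> X) -> (R -> X)) : Prop :=
  (forall a, is_path m a -> is_path l (S a)) /\
  (forall a, is_path m a -> exists t : R, 0 <= t /\ S a t = a t) /\
  (forall a a' (t : R), is_path m a -> is_path m a' -> 0 <= t ->
      agree_lt t a a' -> agree_le t (S a) (S a')).

Definition lion_has_strategy (R : realType) (X : topologicalType) (m l : X)
  : Prop := exists S : (R -> X) -> (R -> X), lion_strategy m l S.

(* Main.v *)
Require Import Defs.
From mathcomp Require Import all_boot all_order all_algebra.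
From mathcomp Require Import all_classical all_reals topology normedtype.
From Stdlib Require Import ClassicalEpsilon.
Set Implicit Arguments. Unset Strict Implicit. Unset Printing Implicit Defensive.
Import Order.TTheory GRing.Theory Num.Theory.
Local Open Scope classical_set_scope.
Local Open Scope ring_scope.

Lemma indisc_cont (T X : topologicalType) (f : T -> X) :
  indiscrete X -> continuous f.
Proof.
move=> hX x B; rewrite nbhsE => -[U [oU Ux] UB].
case: (hX U oU) => HU.
  by rewrite HU in Ux.
apply: (filterS _ filterT) => y _; apply: UB; rewrite HU //.
Qed.

Section Strat.
Variables (R : realType) (X : topologicalType) (l : X).

Definition eqv (u v : nat -> X) := exists N, forall n, (N <= n)%N -> u n = v n.

Definition rep (u : nat -> X) : nat -> X :=
  epsilon (inhabits (fun _ => l)) (fun v => eqv v u).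

Lemma rep_eqv u : eqv (rep u) u.
Proof.
rewrite /rep; apply: (epsilon_spec (inhabits (fun _ => l)) (fun v => eqv v u)).
by exists u; exists 0%N.
Qed.

Lemma eqv_sym u v : eqv u v -> eqv v u.
Proof. by move=> [N HN]; exists N => n /HN. Qed.

Lemma eqv_trans u v w : eqv u v -> eqv v w -> eqv u w.
Proof.
move=> [N HN] [M HM]; exists (maxn N M) => n hn.
rewrite HN ?HM //; [exact: leq_trans (leq_maxr _ _) hn|exact: leq_trans (leq_maxl _ _) hn].
Qed.

Lemma rep_eq u v : eqv u v -> rep u = rep v.
Proof.
move=> huv; rewrite /rep; congr epsilon.
apply: funext => w; apply: propext; split => h.
  exact: (eqv_trans h huv).
exact: (eqv_trans h (eqv_sym huv)).
Qed.

Definition useq (a : R -> X) : nat -> X := fun j => a (j%:R^-1).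
Definition wseq (a : R -> X) (k : nat) : nat -> X :=
  fun j => if (j <= k)%N then l else a (j%:R^-1).

Definition strat (a : R -> X) : R -> X := fun t =>
  if (0 < t) then rep (wseq a (Num.truncn (t^-1))) (Num.truncn (t^-1)) else l.

Lemma wseq_eqv a k : eqv (wseq a k) (useq a).
Proof. by exists k.+1 => n hn; rewrite /wseq /useq leqNgt hn. Qed.

End Strat.

Theorem mainTheorem3 (R : realType) (X : topologicalType) :
  indiscrete X -> forall m l : X, lion_has_strategy R m l.
Proof.
move=> hX m l; exists (@strat R X l); split; [|split].
- move=> a _; split; first exact/continuous_subspaceT/indisc_cont.
  by rewrite /strat ltxx.
- move=> a _.
  have [N HN] := rep_eqv l (useq a).
  exists (N.+1%:R^-1); split; first by rewrite invr_ge0 ler0n.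
  rewrite /strat invr_gt0 ltr0Sn invrK.
  have -> : Num.truncn (N.+1%:R : R) = N.+1 by apply: truncn_def; rewrite lexx ltr_nat ltnSn.
  rewrite (rep_eq l (wseq_eqv l a N.+1)) HN //.
- move=> a a' t _ _ t0 hag s s0 st; rewrite /strat.
  case: ifP => // sp.
  set k := Num.truncn (s^-1).
  have -> : wseq l a k = wseq l a' k.
    apply: funext => j; rewrite /wseq; case: ifP => // hj.
    have jp : (0 < j)%N by apply: leq_ltn_trans (leq0n k) _; rewrite ltnNge hj.
    apply: hag; first by rewrite invr_ge0 ler0n.
    apply: lt_le_trans st.
    rewrite -(invrK s) ltf_pV2 ?posrE ?ltr0n ?invr_gt0 //.
    have := truncnS_gt (s^-1); move/lt_le_trans; apply.
    by rewrite ler_nat ltnNge hj.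
  by [].
Qed.
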